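(* For conjunctive guarded systems of type $(A,B)$ and every LTL formula without the next operator $h(A,B_1)$: for all $n\ge1$, if some unconditionally fair initializing run of $(A,B)^{(1,n)}$ satisfies $h(A,B_1)$, then some unconditionally fair initializing run of $(A,B)^{(1,1)}$ satisfies $h(A,B_1)$.
   Context: A process template is $U=(Q_U,\mathit{init}_U,\Sigma_U,\delta_U)$ with finite states $Q_U$, initial state $\mathit{init}_U$, finite input alphabet $\Sigma_U$ and guarded transitions $\delta_U\subseteq Q_U\times\Sigma_U\times 2^{Q_A\cup Q_B}\times Q_U$; templates $A,B$ have disjoint state sets and disjoint alphabets. The system $(A,B)^{(1,n)}$ consists of one copy of $A$ and $n$ copies $B_1,\dots,B_n$ of $B$; a global state $s$ gives each process a local state, a global input $e$ gives each process an input letter, and initially all processes are in their initial states. In a conjunctive system a guard $g$ is satisfied for process $p$ in $s$ iff every process $p'\ne p$ has $s(p')\in g$, and $\mathit{init}_A,\mathit{init}_B$ belong to every guard. A local transition $(q,\sigma,g,q')$ of $p$ is enabled for $(s,e)$ if $s(p)=q$, $e(p)=\sigma$ and $g$ is satisfied for $p$ in $s$; a global step changes the state of exactly one process along an enabled transition. A path is a sequence of configurations $(s_1,e_1,p_1),(s_2,e_2,p_2),\dots$ where $p_t$ makes the step from $s_t$ to $s_{t+1}$ under $e_t$, a configuration $(s,e,\bot)$ occurs (as the last one) exactly when all processes are disabled, and $e_{t+1}(p)=e_t(p)$ for every process $p$ not moving at moment $t$. A run is a maximal path from the initial state. A run is unconditionally fair if it is infinite and every process moves infinitely often; it is initializing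 if every process that moves infinitely often visits its template's initial state infinitely often. $h(A,B_1)$ is an LTL formula without next operator over atomic propositions from $Q_A\cup\Sigma_A$ and $(Q_B\cup\Sigma_B)\times\{1\}$, interpreted on the local states and inputs of $A$ and $B_1$ along the run. *)

(* Defs.v *)
From mathcomp Require Import all_boot.
Set Implicit Arguments. Unset Strict Implicit. Unset Printing Implicit Defensive.

(* A process template U = (Q, init, Sigma, delta) whose guards are subsets of
   the global local-state space G (= Q_A + Q_B). *)
Record template (Q S G : finType) := Template {
  tinit  : Q;
  tdelta : Q -> S -> {set G} -> Q -> bool }.

Section System.
Variables (QA QB SA SB : finType).
Notation G := (QA + QB)%type.
Variables (A : template QA SA G) (B : template QB SB G).

Definition conjunctive : Prop :=
  (forall q a g q', tdelta A q a g q' -> (inl (tinit A) \in g) /\ (inr (tinit B) \in g)) /\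
  (forall q b g q', tdelta B q b g q' -> (inl (tinit A) \in g) /\ (inr (tinit B) \in g)).

Variable n : nat.
(* Processes of (A,B)^(1,n): None = the copy of A, Some i = B_(i+1). *)
Definition proc := option 'I_n.
Definition gstate := (QA * ('I_n -> QB))%type.
Definition ginput := (SA * ('I_n -> SB))%type.

Definition lstate (s : gstate) (p : proc) : G :=
  match p with None => inl s.1 | Some i => inr (s.2 i) end.
Definition linput (e : ginput) (p : proc) : (SA + SB)%type :=
  match p with None => inl e.1 | Some i => inr (e.2 i) end.
Definition init_of (p : proc) : G :=
  match p with None => inl (tinit A) | Some _ => inr (tinit B) end.

Definition guard_sat (s : gstate) (p : proc) (g : {set G}) : Prop :=
  forall p', p' <> p -> lstate s p' \in g.

Definition step (s : gstate) (e : ginput) (p : proc) (s' : gstate) : Prop :=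
  match p with
  | None => exists g, [/\ tdelta A s.1 e.1 g s'.1, guard_sat s None g
                         & forall j, s'.2 j = s.2 j]
  | Some i => exists g, [/\ tdelta B (s.2 i) (e.2 i) g (s'.2 i),
                            guard_sat s (Some i) g, s'.1 = s.1
                          & forall j, j <> i -> s'.2 j = s.2 j]
  end.

(* infinite run (an infinite path from the initial state is maximal):
   configurations (s t, e t, p t) *)
Definition infinite_run (s : nat -> gstate) (e : nat -> ginput) (p : nat -> proc) : Prop :=
  [/\ (s 0).1 = tinit A, (forall i, (s 0).2 i = tinit B),
      (forall t, step (s t) (e t) (p t) (s t.+1))
    & (forall t q, q <> p t -> linput (e t.+1) q = linput (e t) q)].

Definition moves_inf_often (p : nat -> proc) (q : proc) : Prop :=
  forall t, exists t', t <= t' /\ p t' = q.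

Definition uncond_fair (p : nat -> proc) : Prop := forall q, moves_inf_often p q.

Definition initializing (s : nat -> gstate) (p : nat -> proc) : Prop :=
  forall q, moves_inf_often p q ->
    forall t, exists t', t <= t' /\ lstate (s t') q = init_of q.

End System.

Inductive ltlx (AP : Type) :=
| LTrue
| LAtom of AP
| LNot of ltlx AP
| LAnd of ltlx AP & ltlx AP
| LUntil of ltlx AP & ltlx AP.
Arguments LTrue {AP}.

Fixpoint holds (AP : Type) (L : nat -> AP -> Prop) (f : ltlx AP) (t : nat) : Prop :=
  match f with
  | LTrue => True
  | LAtom a => L t a
  | LNot f1 => ~ holds L f1 t
  | LAnd f1 f2 => holds L f1 t /\ holds L f2 t
  | LUntil f1 f2 => exists k, t <= k /\ holds L f2 k /\
                      forall j, t <= j -> j < k -> holds L f1 j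
  end.

(* atomic propositions of h(A,B_1): Q_A ∪ Σ_A and (Q_B ∪ Σ_B) × {1} *)
Definition APAB (QA QB SA SB : finType) := ((QA + SA) + (QB + SB))%type.

Definition label (QA QB SA SB : finType) n (s : nat -> gstate QA QB n)
  (e : nat -> ginput SA SB n) (b1 : 'I_n) (t : nat) (a : APAB QA QB SA SB) : Prop :=
  match a with
  | inl (inl q) => (s t).1 = q
  | inl (inr x) => (e t).1 = x
  | inr (inl q) => (s t).2 b1 = q
  | inr (inr x) => (e t).2 b1 = x
  end.

Definition exists_fair_init_run_sat (QA QB SA SB : finType)
  (A : template QA SA (QA + QB)%type) (B : template QB SB (QA + QB)%type)
  n (b1 : 'I_n) (h : ltlx (APAB QA QB SA SB)) : Prop :=
  exists (s : nat -> gstate QA QB n) (e : nat -> ginput SA SB n) (p : nat -> proc n),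
    [/\ infinite_run A B s e p, uncond_fair p, initializing A B s p
      & holds (label s e b1) h 0].

(* Main.v *)
Require Import Defs.
From mathcomp Require Import all_boot.
Set Implicit Arguments. Unset Strict Implicit. Unset Printing Implicit Defensive.

Section Stutter.
Variables (AP : Type) (L L' : nat -> AP -> Prop) (f : nat -> nat).
Hypothesis fmono : forall t u, t <= u -> f t <= f u.
Hypothesis fstep : forall t, f t.+1 <= (f t).+1.
Hypothesis funb : forall m, exists t, m <= f t.
Hypothesis HL : forall t a, L t a <-> L' (f t) a.

Lemma ivt t k m : t <= k -> f t <= m <= f k -> exists j, t <= j <= k /\ f j = m.
Proof.
elim: k => [|k IH] htk /andP[h1 h2].
  move: htk; rewrite leqn0 => /eqP ht; subst t; exists 0; split => //.
  by apply/eqP; rewrite eqn_leq h2 h1.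
case: (ltngtP t k.+1) htk => [htk|htk|htk] htk'; last 2 first.
- by [].
- exists t; rewrite leqnn htk leqnn; split => //.
  by apply/eqP; rewrite eqn_leq h2 -htk h1.
  case: (leqP m (f k)) => hm.
    have [j [/andP[j1 j2] fj]] := IH htk (introT andP (conj h1 hm)).
    by exists j; rewrite j1 (leq_trans j2).
  exists k.+1; rewrite leqnn andbT (ltnW htk); split => //.
  by apply/eqP; rewrite eqn_leq h2 (leq_trans (fstep k)).
Qed.

Lemma holds_f (phi : ltlx AP) : forall t, holds L phi t <-> holds L' phi (f t).
Proof.
elim: phi => [|a|p IH|p1 IH1 p2 IH2|p1 IH1 p2 IH2] t /=.
- by [].
- exact: HL.
- by split => H1 H2; apply: H1; apply/IH.
- by split => -[H1 H2]; split; apply/(IH1 t) || apply/(IH2 t).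
- split.
  + move=> [k [htk [H2 H1]]]; exists (f k); split; first exact: fmono.
    split; first exact/IH2.
    move=> j' hj1 hj2.
    have [j [/andP[hj3 hj4] fj]] := ivt htk (introT andP (conj hj1 (ltnW hj2))).
    have jk : j < k.
      rewrite ltn_neqAle hj4 andbT; apply/eqP => ejk.
      by move: hj2; rewrite -fj ejk ltnn.
    by rewrite -fj; apply/IH1; apply: H1.
  + move=> [k' [htk [H2 H1]]].
    have [u hu] := funb k'.
    have ex : exists j, (t <= j) && (f j == k').
      have [j [/andP[j1 j2] fj]] := ivt (leq_maxl t u)
           (introT andP (conj htk (leq_trans hu (fmono (leq_maxr t u))))).
      by exists j; rewrite j1 fj eqxx.
    case: (ex_minnP ex) => j0 /andP[hj0 /eqP fj0] hmin.
    exists j0; split => //; split; first by apply/IH2; rewrite fj0.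
    move=> j hj1 hj2; apply/IH1; apply: H1; first exact: fmono.
    have : f j <= k' by rewrite -fj0; apply: fmono; apply: ltnW.
    rewrite leq_eqVlt => /orP[/eqP fjk|//].
    have := hmin j; rewrite hj1 fjk eqxx => /(_ isT).
    by rewrite leqNgt hj2.
Qed.
End Stutter.

Section Proj.
Variables (QA QB SA SB : finType).
Variables (A : template QA SA (QA + QB)%type) (B : template QB SB (QA + QB)%type).
Variables (n : nat) (b1 : 'I_n).
Variables (s : nat -> gstate QA QB n) (e : nat -> ginput SA SB n) (p : nat -> proc n).
Hypothesis Hrun : infinite_run A B s e p.
Hypothesis Hfair : uncond_fair p.

Definition goodb t := (p t == None) || (p t == Some b1).

Lemma ex_next t : exists u, (t <= u) && goodb u.
Proof. have [u [le pu]] := Hfair None t. by exists u; rewrite le /goodb pu eqxx. Qed.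

Definition next t := ex_minn (ex_next t).

Lemma nextP t : [/\ t <= next t, goodb (next t) & forall u, t <= u -> goodb u -> next t <= u].
Proof.
rewrite /next; case: ex_minnP => m /andP[h1 h2] h3; split => // u hu gu.
by apply: h3; rewrite hu gu.
Qed.

Lemma next_good t : goodb t -> next t = t.
Proof.
move=> g; case: (nextP t) => h1 _ h3; apply/eqP; rewrite eqn_leq h1 andbT.
exact: h3.
Qed.

Fixpoint sigm k := match k with 0 => next 0 | k'.+1 => next (sigm k').+1 end.

Fixpoint fc t := match t with 0 => 0 | t'.+1 => fc t' + goodb t' end.

Lemma sig_good k : goodb (sigm k).
Proof. by case: k => [|k]; [case: (nextP 0) | case: (nextP (sigm k).+1)]. Qed.

Lemma sig_fc t : sigm (fc t) = next t.
Proof.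
elim: t => [//|t IH] /=. case g: (goodb t) => /=.
  by rewrite addn1 /= IH (next_good g).
rewrite addn0 IH; case: (nextP t) => a1 a2 a3; case: (nextP t.+1) => c1 c2 c3.
apply/eqP; rewrite eqn_leq; apply/andP; split.
  by apply: a3 => //; apply: ltnW.
apply: c3 => //; rewrite ltn_neqAle a1 andbT; apply/eqP => et.
by rewrite -et g in a2.
Qed.

Lemma sig_lt i j : i < j -> sigm i < sigm j.
Proof.
have step k : sigm k < sigm k.+1 by rewrite /=; case: (nextP (sigm k).+1).
elim: j => // j IH; rewrite ltnS leq_eqVlt => /orP[/eqP->|h]; first exact: step.
exact: ltn_trans (IH h) (step j).
Qed.

Lemma fc_sigm k : fc (sigm k) = k.
Proof.
have := sig_fc (sigm k); rewrite next_good ?sig_good //.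
case: (ltngtP (fc (sigm k)) k) => // h /eqP; rewrite ?(ltn_eqF (sig_lt h)) //.
by rewrite eq_sym (ltn_eqF (sig_lt h)).
Qed.

Lemma fc_mono i j : i <= j -> fc i <= fc j.
Proof.
elim: j => [|j IH]; first by rewrite leqn0 => /eqP->.
rewrite leq_eqVlt => /orP[/eqP->//|h]; exact: leq_trans (IH h) (leq_addr _ _).
Qed.

Lemma frozen t u : t <= u -> (forall v, t <= v < u -> ~~ goodb v) ->
  [/\ (s u).1 = (s t).1, (s u).2 b1 = (s t).2 b1, (e u).1 = (e t).1 & (e u).2 b1 = (e t).2 b1].
Proof.
case: Hrun => _ _ Hstep Hin.
elim: u => [|u IH] htu hng.
  by move: htu; rewrite leqn0 => /eqP ->.
case: (ltngtP t u.+1) htu => [htu|htu|htu] // _; last by rewrite htu.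
have [IH1 IH2 IH3 IH4] := IH htu (fun v hv => hng v (introT andP
   (conj (proj1 (andP hv)) (ltnW (proj2 (andP hv)))))).
have gu := hng u (introT andP (conj htu (ltnSn u))).
move: gu; rewrite /goodb; case Hp: (p u) => [i|] //= gu.
have Hs := Hstep u; rewrite Hp in Hs; case: Hs => g [_ _ S1 S2].
have ib : b1 <> i by move=> eb; rewrite eb eqxx in gu.
have E1 := Hin u None; have E2 := Hin u (Some b1).
rewrite Hp /= in E1 E2.
have {E1} [E1] := E1 ltac:(discriminate).
have {E2} [E2] := E2 ltac:(by case).
by split; rewrite -?IH1 -?IH2 -?IH3 -?IH4 ?S1 ?S2 ?E1 ?E2.
Qed.

Lemma frozen_next t :
  [/\ (s (next t)).1 = (s t).1, (s (next t)).2 b1 = (s t).2 b1,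
      (e (next t)).1 = (e t).1 & (e (next t)).2 b1 = (e t).2 b1].
Proof.
case: (nextP t) => h1 _ h3; apply: frozen => // v /andP[v1 v2].
apply/negP => gv; have := h3 v v1 gv; by rewrite leqNgt v2.
Qed.

Hypothesis Hinit : initializing A B s p.

Lemma proj_run (h : ltlx (APAB QA QB SA SB)) :
  holds (label s e b1) h 0 -> exists_fair_init_run_sat A B (ord0 : 'I_1) h.
Proof.
move=> Hh.
have [Hs0 Hs0' Hstep Hin] := Hrun.
pose s' := fun k => ((s (sigm k)).1, fun _ : 'I_1 => (s (sigm k)).2 b1) : gstate QA QB 1.
pose e' := fun k => ((e (sigm k)).1, fun _ : 'I_1 => (e (sigm k)).2 b1) : ginput SA SB 1.
pose p' := fun k => (if p (sigm k) is Some _ then Some ord0 else None) : proc 1.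
have fcge k t' : sigm k <= t' -> k <= fc t'.
  by move=> ht; rewrite -{1}(fc_sigm k); exact: fc_mono.
exists s', e', p'; split.
- split.
  + by have [F1 _ _ _] := frozen_next 0; rewrite /s' /= F1 Hs0.
  + by move=> i; have [_ F2 _ _] := frozen_next 0; rewrite /s' /= F2 Hs0'.
  + move=> k; have [F1 F2 F3 F4] := frozen_next (sigm k).+1.
    have gk := sig_good k.
    rewrite /step /p' /s' /e' /=.
    case Hp: (p (sigm k)) => [i|] in gk *.
    * move: gk; rewrite /goodb Hp /= => /eqP [ei]; subst i.
      have := Hstep (sigm k); rewrite Hp => -[g [T1 G1 S1 S2]].
      exists g; split.
      -- by rewrite F2.
      -- move=> [q|] hq /=; first by rewrite (ord1 q) in hq.
         exact: (G1 None).
      -- by rewrite F1 S1.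
      -- by move=> j hj; rewrite (ord1 j) in hj.
    * have := Hstep (sigm k); rewrite Hp => -[g [T1 G1 S1]].
      exists g; split.
      -- by rewrite F1.
      -- move=> [q|] hq //=; exact: (G1 (Some b1)).
      -- by move=> j /=; rewrite F2 S1.
  + move=> k q hq; have [F1 F2 F3 F4] := frozen_next (sigm k).+1.
    rewrite /p' in hq.
    case: q hq => [j|] hq /=; case Hp: (p (sigm k)) => [i|] in hq *.
    * by rewrite (ord1 j) in hq.
    * have := Hin (sigm k) (Some b1); rewrite Hp => /(_ ltac:(discriminate)) /= [E].
      by rewrite /e' /= F4 E.
    * have := Hin (sigm k) None; rewrite Hp => /(_ ltac:(discriminate)) /= [E].
      by rewrite /e' /= F3 E.
    * by [].
- move=> q k; case: q => [j|].
  + have [t' [ht pt]] := Hfair (Some b1) (sigm k).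
    have gt : goodb t' by rewrite /goodb pt eqxx orbT.
    exists (fc t'); split; first exact: fcge.
    by rewrite /p' sig_fc (next_good gt) pt (ord1 j).
  + have [t' [ht pt]] := Hfair None (sigm k).
    have gt : goodb t' by rewrite /goodb pt eqxx.
    exists (fc t'); split; first exact: fcge.
    by rewrite /p' sig_fc (next_good gt) pt.
- move=> q _ k; case: q => [j|].
  + have [t' [ht st]] := Hinit (Hfair (Some b1)) (sigm k).
    exists (fc t'); split; first exact: fcge.
    have [F1 F2 F3 F4] := frozen_next t'.
    by rewrite /s' /= sig_fc F2.
  + have [t' [ht st]] := Hinit (Hfair None) (sigm k).
    exists (fc t'); split; first exact: fcge.
    have [F1 F2 F3 F4] := frozen_next t'.
    by rewrite /s' /= sig_fc F1.
- have fstep t : fc t.+1 <= (fc t).+1.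
    by rewrite /= -addn1 leq_add2l leq_b1.
  have funb m : exists t, m <= fc t by exists (sigm m); rewrite fc_sigm.
  have HL t a : label s e b1 t a <-> label s' e' ord0 (fc t) a.
    have [F1 F2 F3 F4] := frozen_next t.
    by case: a => [[q|x]|[q|x]]; rewrite /label /s' /e' /= sig_fc ?F1 ?F2 ?F3 ?F4.
  exact: ((holds_f fc_mono fstep funb HL h 0).1 Hh).
Qed.

End Proj.

Theorem mainTheorem12 (QA QB SA SB : finType)
  (A : template QA SA (QA + QB)%type) (B : template QB SB (QA + QB)%type)
  (hconj : conjunctive A B) (h : ltlx (APAB QA QB SA SB))
  (n : nat) (hn : 0 < n) :
  exists_fair_init_run_sat A B (Ordinal hn) h ->
  exists_fair_init_run_sat A B (ord0 : 'I_1) h.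
Proof.
move=> [s [e [p [Hr Hf Hi Hh]]]].
exact: (proj_run Hr Hf Hi Hh).
Qed.
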